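(* Let $M=r^2\phi^{-2}\partial_r$ on the expanding region $\mathcal{R}^+$ of Schwarzschild–de Sitter. Then for every (sufficiently regular) function $\psi$, $K^M[\psi]\le0$ everywhere on $\mathcal{R}^+$.
   Context: Fix $\Lambda>0$, $0<3m<1/\sqrt\Lambda$; $D(r)=\frac{\Lambda}{3}r^2-1+\frac{2m}{r}$, $r_{\mathcal{C}}$ its largest positive root; $\mathcal{R}^+=(r_{\mathcal{C}},\infty)_r\times\mathbb{R}_t\times\mathbb{S}^2$ with $g=-D^{-1}dr^2+Ddt^2+r^2\gamma_{\mathbb{S}^2}$; $\phi=D^{-1/2}$. $T_{\mu\nu}[\psi]=\partial_\mu\psi\partial_\nu\psi-\frac12g_{\mu\nu}g^{\alpha\beta}\partial_\alpha\psi\partial_\beta\psi$; for a vector field $X$, ${}^{(X)}\pi^{\mu\nu}=\frac12(\nabla^\mu X^\nu+\nabla^\nu X^\mu)$ and $K^X[\psi]={}^{(X)}\pi^{\mu\nu}T_{\mu\nu}[\psi]$. *)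

(* Defs.v *)
From Stdlib Require Import Reals.
From Coquelicot Require Import Coquelicot.
Open Scope R_scope.

(* Coordinates on R^+ : x 0 = r, x 1 = t, x 2 = theta, x 3 = varphi
   (polar coordinates on S^2, gamma = dtheta^2 + sin^2 theta dvarphi^2).
   Points are functions nat -> R; only indices 0..3 are used. *)
Definition point := nat -> R.

Definition Dsds (Lam m r : R) : R := Lam / 3 * r ^ 2 - 1 + 2 * m / r.
Definition phi (Lam m r : R) : R := / sqrt (Dsds Lam m r).

Definition largest_pos_root (Lam m rC : R) : Prop :=
  0 < rC /\ Dsds Lam m rC = 0 /\ (forall r, rC < r -> Dsds Lam m r <> 0).

(* the chart of R^+ = (r_C, oo) x R x S^2 (sphere minus poles) *)
Definition inRplus (rC : R) (x : point) : Prop :=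
  rC < x 0%nat /\ 0 < x 2%nat < PI.

Definition upd (x : point) (mu : nat) (s : R) : point :=
  fun i => if Nat.eqb i mu then s else x i.

Definition pd (f : point -> R) (mu : nat) (x : point) : R :=
  Derive (fun s => f (upd x mu s)) (x mu).

Definition sum4 (f : nat -> R) : R := f 0%nat + f 1%nat + f 2%nat + f 3%nat.

Definition gSdS (Lam m : R) (x : point) (mu nu : nat) : R :=
  if Nat.eqb mu nu then
    match mu with
    | 0%nat => - / Dsds Lam m (x 0%nat)
    | 1%nat => Dsds Lam m (x 0%nat)
    | 2%nat => (x 0%nat) ^ 2
    | 3%nat => (x 0%nat) ^ 2 * (sin (x 2%nat)) ^ 2
    | _ => 0
    end
  else 0.

Definition gSdSinv (Lam m : R) (x : point) (mu nu : nat) : R :=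
  if Nat.eqb mu nu then
    match mu with
    | 0%nat => - Dsds Lam m (x 0%nat)
    | 1%nat => / Dsds Lam m (x 0%nat)
    | 2%nat => / (x 0%nat) ^ 2
    | 3%nat => / ((x 0%nat) ^ 2 * (sin (x 2%nat)) ^ 2)
    | _ => 0
    end
  else 0.

Definition Chr (g gi : point -> nat -> nat -> R) (x : point) (lam mu nu : nat) : R :=
  / 2 * sum4 (fun s => gi x lam s *
      (pd (fun y => g y s nu) mu x + pd (fun y => g y s mu) nu x
       - pd (fun y => g y mu nu) s x)).

Definition covD (g gi : point -> nat -> nat -> R) (X : point -> nat -> R)
  (x : point) (mu nu : nat) : R :=
  pd (fun y => X y nu) mu x + sum4 (fun a => Chr g gi x nu mu a * X x a).

Definition deform (g gi : point -> nat -> nat -> R) (X : point -> nat -> R)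
  (x : point) (mu nu : nat) : R :=
  / 2 * (sum4 (fun a => gi x mu a * covD g gi X x a nu)
         + sum4 (fun a => gi x nu a * covD g gi X x a mu)).

Definition Tem (g gi : point -> nat -> nat -> R) (psi : point -> R)
  (x : point) (mu nu : nat) : R :=
  pd psi mu x * pd psi nu x
  - / 2 * g x mu nu * sum4 (fun a => sum4 (fun b => gi x a b * pd psi a x * pd psi b x)).

Definition KX (g gi : point -> nat -> nat -> R) (X : point -> nat -> R)
  (psi : point -> R) (x : point) : R :=
  sum4 (fun mu => sum4 (fun nu => deform g gi X x mu nu * Tem g gi psi x mu nu)).

Definition Mfield (Lam m : R) (x : point) (mu : nat) : R :=
  if Nat.eqb mu 0 then (x 0%nat) ^ 2 * / (phi Lam m (x 0%nat)) ^ 2 else 0.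

(* Main.v *)
Require Import Defs.
From Stdlib Require Import Reals Lra Psatz.
From Coquelicot Require Import Coquelicot.
Open Scope R_scope.
Definition dD (Lam m r : R) := 2*Lam/3*r - 2*m/r^2.

Lemma p_big (Lam m y : R) : 0 < Lam -> 0 < m -> 0 < y ->
  0 < Lam/3 * (y + 3/Lam + 1)^3 - (y + 3/Lam + 1) + 2*m.
Proof.
  intros HL Hm Hy. set (R0 := y + 3/Lam + 1).
  assert (H3 : 0 < 3/Lam) by (apply Rdiv_lt_0_compat; lra).
  assert (HR : 3/Lam <= R0^2) by (unfold R0; nra).
  assert (HR' : 1 <= Lam/3 * R0^2).
  { replace 1 with (Lam/3 * (3/Lam)) by (field; lra).
    apply Rmult_le_compat_l; [lra|exact HR]. }
  assert (0 < R0) by (unfold R0; lra).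
  replace (Lam / 3 * R0 ^ 3) with ((Lam/3*R0^2)*R0) by ring. nra.
Qed.

Lemma Dpos (Lam m rC : R)
  (HLam : 0 < Lam) (Hm0 : 0 < 3 * m) (Hm1 : 3 * m < / sqrt Lam)
  (HrC : largest_pos_root Lam m rC) r : rC < r ->
  0 < Dsds Lam m r /\ / sqrt Lam < r.
Proof.
  intros Hr. destruct HrC as [HrC0 [_ Hno]].
  pose (p := fun y => Lam/3 * y^3 - y + 2*m).
  assert (pD : forall y, 0 < y -> Dsds Lam m y = p y / y).
  { intros y Hy. unfold Dsds, p. field. lra. }
  assert (Hpos : forall y, rC < y -> 0 < p y).
  { intros y Hy. destruct (Rtotal_order (p y) 0) as [Hlt|[Heq|Hgt]]; [|exfalso|exact Hgt].
    - exfalso. assert (Hlt2 : y < y + 3/Lam + 1).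
      { assert (0 < 3/Lam) by (apply Rdiv_lt_0_compat; lra). lra. }
      destruct (IVT p y (y + 3/Lam + 1)) as [z [Hz1 Hz2]].
      + unfold p; reg.
      + exact Hlt2.
      + exact Hlt.
      + unfold p. apply p_big; lra.
      + apply (Hno z); [lra|]. rewrite pD by lra. rewrite Hz2. field. lra.
    - apply (Hno y Hy). rewrite pD by lra. rewrite Heq. field. lra. }
  assert (Hs : 0 < sqrt Lam) by (apply sqrt_lt_R0; lra).
  set (r0 := / sqrt Lam) in *.
  assert (Hr0 : 0 < r0) by (apply Rinv_0_lt_compat; lra).
  assert (Hr0sq : Lam * r0^2 = 1).
  { unfold r0. replace ((/ sqrt Lam)^2) with (/ (sqrt Lam * sqrt Lam)) by (field; lra).
    rewrite sqrt_sqrt by lra. field. lra. }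
  clearbody r0.
  assert (pr0 : p r0 < 0).
  { unfold p; cbv beta. assert (E : Lam/3*r0^3 = (Lam*r0^2)*r0/3) by (unfold Rdiv; ring). rewrite E, Hr0sq. lra. }
  split.
  - rewrite pD by lra. apply Rdiv_lt_0_compat; [apply Hpos; lra| lra].
  - destruct (Rle_lt_dec r r0) as [Hle|Hlt]; [|exact Hlt].
    exfalso. assert (0 < p r0) by (apply Hpos; lra). lra.
Qed.


Definition dg (Lam m : R) (x : point) (s nu mu : nat) : R :=
  if Nat.eqb s nu then
    match s, mu with
    | 0%nat, 0%nat => dD Lam m (x 0%nat) / (Dsds Lam m (x 0%nat))^2
    | 1%nat, 0%nat => dD Lam m (x 0%nat)
    | 2%nat, 0%nat => 2 * x 0%nat
    | 3%nat, 0%nat => 2 * x 0%nat * (sin (x 2%nat))^2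
    | 3%nat, 2%nat => (x 0%nat)^2 * (2 * sin (x 2%nat) * cos (x 2%nat))
    | _, _ => 0
    end
  else 0.

Lemma pd_g Lam m x s nu mu : 0 < x 0%nat -> 0 < Dsds Lam m (x 0%nat) ->
  pd (fun y => gSdS Lam m y s nu) mu x = dg Lam m x s nu mu.
Proof.
  intros H0 HD. unfold pd. apply is_derive_unique.
  destruct s as [|[|[|[|s]]]], nu as [|[|[|[|nu]]]], mu as [|[|[|[|mu]]]];
  unfold gSdS, upd, dg; cbn [Nat.eqb];
  try (apply is_derive_const);
  unfold Dsds, dD in *; auto_derive; repeat split; try lra; try field; try lra.
all: try (destruct (_ =? _); reflexivity).
  split; [lra|].
  assert (E : (Lam * x 0%nat ^ 2 - 3) * x 0%nat + 2 * m * 3 = (Lam / 3 * x 0%nat ^ 2 - 1 + 2 * m / x 0%nat) * (3 * x 0%nat)) by (field; lra).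
  rewrite E. apply Rgt_not_eq. apply Rmult_lt_0_compat; lra.
Qed.

Lemma invphi2 Lam m r : 0 < Dsds Lam m r -> / (phi Lam m r)^2 = Dsds Lam m r.
Proof.
  intros H. unfold phi. assert (Hs : 0 < sqrt (Dsds Lam m r)) by (apply sqrt_lt_R0; lra).
  replace ((/ sqrt (Dsds Lam m r))^2) with (/ (sqrt (Dsds Lam m r) * sqrt (Dsds Lam m r))) by (field; lra).
  rewrite sqrt_sqrt by lra. field. lra.
Qed.

Lemma Mf0 Lam m x : 0 < Dsds Lam m (x 0%nat) -> Mfield Lam m x 0 = (x 0%nat)^2 * Dsds Lam m (x 0%nat).
Proof. intros H. unfold Mfield. cbn [Nat.eqb]. rewrite invphi2; auto. Qed.

Lemma MfS Lam m x n : Mfield Lam m x (S n) = 0.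
Proof. reflexivity. Qed.

Lemma pd_M Lam m rC x nu mu (Hloc : forall y, rC < y -> 0 < Dsds Lam m y)
  (Hx : rC < x 0%nat) (H0 : 0 <= rC) :
  pd (fun y => Mfield Lam m y nu) mu x =
  if andb (Nat.eqb nu 0) (Nat.eqb mu 0) then 2 * x 0%nat * Dsds Lam m (x 0%nat) + (x 0%nat)^2 * dD Lam m (x 0%nat) else 0.
Proof.
  unfold pd. apply is_derive_unique.
  destruct nu as [|nu]; [| unfold Mfield; cbn [Nat.eqb]; auto_derive; auto; ring].
  destruct mu as [|mu]; [| unfold Mfield, upd; cbn [Nat.eqb]; auto_derive; auto; ring].
  cbn [andb Nat.eqb].
  apply (is_derive_ext_loc (fun s => s^2 * Dsds Lam m s)).
  - assert (Hp : 0 < x 0%nat - rC) by lra.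
    exists (mkposreal _ Hp). intros y Hy.
    unfold upd, Mfield; cbn [Nat.eqb].
    rewrite invphi2; [reflexivity|]. apply Hloc.
    unfold ball in Hy; simpl in Hy; unfold AbsRing_ball, abs, minus, plus, opp in Hy; simpl in Hy.
    apply Rabs_lt_between' in Hy. unfold upd; simpl. lra.
  - unfold upd; cbn [Nat.eqb]. unfold Dsds, dD. auto_derive.
    + lra.
    + field. lra.
Qed.

Definition Cv (Lam m : R) (x : point) (mu nu : nat) : R :=
  let r := x 0%nat in let D := Dsds Lam m r in let f := r^2 * D in
  let f' := 2 * r * D + r^2 * dD Lam m r in
  if Nat.eqb mu nu then
    match mu with
    | 0%nat => f' - dD Lam m r * f / (2 * D)
    | 1%nat => dD Lam m r * f / (2 * D)
    | 2%nat => f / r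
    | 3%nat => f / r
    | _ => 0
    end
  else 0.

Lemma covD_val Lam m rC x mu nu (Hloc : forall y, rC < y -> 0 < Dsds Lam m y)
  (Hx : rC < x 0%nat) (H0 : 0 < rC) (Hsin : 0 < sin (x 2%nat)) :
  (mu < 4)%nat -> (nu < 4)%nat ->
  covD (gSdS Lam m) (gSdSinv Lam m) (Mfield Lam m) x mu nu = Cv Lam m x mu nu.
Proof.
  intros Hmu Hnu.
  assert (HD : 0 < Dsds Lam m (x 0%nat)) by (apply Hloc; lra).
  assert (Hr : 0 < x 0%nat) by lra.
  unfold covD, Chr, sum4.
  rewrite !pd_g by assumption.
  rewrite (pd_M Lam m rC) by (auto; lra).
  rewrite !MfS, Mf0 by assumption.
  destruct mu as [|[|[|[|mu]]]]; [| | | | lia];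
  destruct nu as [|[|[|[|nu]]]]; try lia;
  unfold Cv, dg, gSdSinv; cbn [Nat.eqb andb]; field; repeat split; lra.
Qed.

Lemma KX_val Lam m rC x psi (Hloc : forall y, rC < y -> 0 < Dsds Lam m y)
  (Hx : rC < x 0%nat) (H0 : 0 < rC) (Hsin : 0 < sin (x 2%nat)) :
  KX (gSdS Lam m) (gSdSinv Lam m) (Mfield Lam m) psi x =
  - 2 * x 0%nat * (pd psi 1 x)^2
  - (Dsds Lam m (x 0%nat) / x 0%nat + dD Lam m (x 0%nat) / 2) *
    ((pd psi 2 x)^2 + (pd psi 3 x)^2 / (sin (x 2%nat))^2).
Proof.
  assert (HD : 0 < Dsds Lam m (x 0%nat)) by (apply Hloc; lra).
  assert (Hr : 0 < x 0%nat) by lra.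
  unfold KX, deform, Tem, sum4.
  rewrite !(covD_val Lam m rC) by (auto; lia).
  unfold Cv, gSdSinv, gSdS, dD; cbn [Nat.eqb].
  generalize (pd psi 0 x) (pd psi 1 x) (pd psi 2 x) (pd psi 3 x); intros a0 a1 a2 a3.
  revert HD Hr Hsin. generalize (Dsds Lam m (x 0%nat)) (x 0%nat) (sin (x 2%nat)); intros D r s HD Hr Hs.
  field. repeat split; lra.
Qed.

Theorem proposition3p4 (Lam m rC : R)
  (HLam : 0 < Lam) (Hm0 : 0 < 3 * m) (Hm1 : 3 * m < / sqrt Lam)
  (HrC : largest_pos_root Lam m rC)
  (psi : point -> R)
  (Hpsi : forall (x : point) (mu : nat), inRplus rC x -> (mu < 4)%nat ->
            ex_derive (fun s => psi (upd x mu s)) (x mu)) :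
  forall x : point, inRplus rC x ->
    KX (gSdS Lam m) (gSdSinv Lam m) (Mfield Lam m) psi x <= 0.
Proof.
  intros x [Hx [Hth1 Hth2]].
  assert (H0 : 0 < rC) by (destruct HrC; lra).
  assert (Hloc : forall y, rC < y -> 0 < Dsds Lam m y)
    by (intros y Hy; apply (Dpos Lam m rC HLam Hm0 Hm1 HrC y Hy)).
  assert (Hsin : 0 < sin (x 2%nat)) by (apply sin_gt_0; lra).
  rewrite (KX_val Lam m rC) by assumption.
  destruct (Dpos Lam m rC HLam Hm0 Hm1 HrC (x 0%nat) Hx) as [HD Hr0].
  assert (Hr : 0 < x 0%nat) by lra.
  set (r := x 0%nat) in *.
  assert (E : Dsds Lam m r / r + dD Lam m r / 2 = (2 * r * Dsds Lam m r + r - 3 * m) / r^2).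
  { unfold Dsds, dD. field. lra. }
  rewrite E.
  assert (Hc : 0 < (2 * r * Dsds Lam m r + r - 3 * m) / r^2).
  { apply Rdiv_lt_0_compat; [|nra]. nra. }
  assert (Hq : 0 <= (pd psi 2 x)^2 + (pd psi 3 x)^2 / (sin (x 2%nat))^2).
  { apply Rplus_le_le_0_compat; [nra|]. unfold Rdiv; apply Rmult_le_pos; [nra|]. apply Rlt_le, Rinv_0_lt_compat; nra. }
  nra.
Qed.
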